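(* Let $m>1$, $d\ge 2$ and $t$ be integers with $\gcd(d,m)=1$ and $\gcd(d,t)=1$, and let $a$ be an indeterminate. Then \[ \sum_{k=0}^{m-1}[2dk+t]\frac{(q^t;q^d)_k^2(aq^t;q^d)_k(q^t/a;q^d)_k}{(q^d;q^d)_k^2(aq^d;q^d)_k(q^d/a;q^d)_k}q^{(d-2t)k}\equiv 0\pmod{\Phi_m(q)}. \]
   Context: For an indeterminate $q$, $(x;q)_k=(1-x)(1-xq)\cdots(1-xq^{k-1})$ (with $(x;q)_0=1$). For any integer $j$, $[j]=(1-q^j)/(1-q)$. $\Phi_m(q)$ is the $m$-th cyclotomic polynomial in $q$. A congruence $A\equiv B\pmod{\Phi_m(q)}$ between rational functions in $q$ and $a$ means that $A-B$, written as a quotient of polynomials with denominator coprime to $\Phi_m(q)$, has numerator divisible by $\Phi_m(q)$. *)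

(* Defs.v *)
From mathcomp Require Import all_boot all_algebra all_field.
Set Implicit Arguments. Unset Strict Implicit. Unset Printing Implicit Defensive.
Import GRing.Theory.
Local Open Scope ring_scope.

(* Polynomial ring Q[q][a]: inner variable q, outer variable a. *)
Definition R2 : idomainType := {poly {poly rat}}.
Definition F2 : fieldType := {fraction R2}.

Definition qv : F2 := tofrac ((('X : {poly rat})%:P) : R2).
Definition av : F2 := tofrac ('X : R2).

Definition PhiQ (m : nat) : R2 :=
  (map_poly (fun z : int => z%:~R : rat) 'Phi_m)%:P.

Definition qpoch (x y : F2) (k : nat) : F2 := \prod_(i < k) (1 - x * y ^+ i).

Definition qint (j : int) : F2 := (1 - qv ^ j) / (1 - qv).

Definition dvdR (g f : R2) : Prop := exists c : R2, f = c * g.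
Definition coprimeR (f g : R2) : Prop :=
  forall h : R2, dvdR h f -> dvdR h g -> h \is a GRing.unit.

(* A = B (mod Phi_m(q)) for rational functions A, B in q and a:
   A - B = N / D with D coprime to Phi_m(q) and Phi_m(q) | N. *)
Definition congr_Phi (m : nat) (A B : F2) : Prop :=
  exists N D : R2, coprimeR D (PhiQ m) /\ dvdR (PhiQ m) N /\
    A - B = tofrac N / tofrac D.

(* Main.v *)
Require Import Defs.
From mathcomp Require Import all_boot all_algebra all_field.
From mathcomp Require Import ring zify.
Set Implicit Arguments. Unset Strict Implicit. Unset Printing Implicit Defensive.
Import GRing.Theory.
Local Open Scope ring_scope.

Definition qpF (F : fieldType) (x y : F) (k : nat) : F := \prod_(i < k) (1 - x * y ^+ i).
Definition Hp (F : fieldType) (w c : F) (n : nat) : F := \prod_(i < n) (1 - c * w ^+ i.+1).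

Lemma qpH (F : fieldType) (c w : F) n : qpF (c * w) w n = Hp w c n.
Proof. by apply: eq_bigr => i _; rewrite exprS mulrA. Qed.

Lemma qpH1 (F : fieldType) (w : F) n : qpF w w n = Hp w 1 n.
Proof. by rewrite -qpH mul1r. Qed.

Lemma HpS (F : fieldType) (w c : F) n : Hp w c n.+1 = Hp w c n * (1 - c * w ^+ n.+1).
Proof. by rewrite /Hp big_ord_recr. Qed.

Lemma Glem (F : fieldType) (w u x y : F) (r k : nat) : u * w ^+ r = 1 -> x * y = 1 ->
  (k <= r)%N -> (forall i, (0 < i <= r)%N -> 1 - y * w ^+ i != 0) ->
  qpF (x * u) w k * Hp w y (r - k) = (\prod_(j < k) (- (x * u * w ^+ j))) * Hp w y r.
Proof.
move=> huw hxy; elim: k => [|k IH] hk hnz.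
  by rewrite /qpF !big_ord0 subn0 !mul1r.
have hk' : (k <= r)%N by apply: ltnW.
have IH' := IH hk' hnz.
have hrk : (0 < r - k <= r)%N by apply/andP; split; lia.
have hH : Hp w y (r - k) = Hp w y (r - k.+1) * (1 - y * w ^+ (r - k)).
  by rewrite -{1}(subnSK hk) HpS subnSK.
apply: (mulIf (hnz _ hrk)).
rewrite /qpF big_ord_recr /= big_ord_recr /=.
have hw : w ^+ k * w ^+ (r - k) = w ^+ r by rewrite -exprD subnKC.
have -> : 1 - x * u * w ^+ k = - (x * u * w ^+ k) * (1 - y * w ^+ (r - k)).
  have h1 : x * u * w ^+ k * (y * w ^+ (r - k)) = 1.
    transitivity ((x * y) * (u * (w ^+ k * w ^+ (r - k)))); first by ring.
    by rewrite hxy hw mul1r huw.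
  by rewrite mulrBr mulr1 mulNr h1 opprK addrC.
rewrite /qpF in IH'.
transitivity ((\prod_(i < k) (1 - x * u * w ^+ i) * Hp w y (r - k)) * - (x * u * w ^+ k) *
   (1 - y * w ^+ (r - k))); first by rewrite hH; ring.
by rewrite IH'; ring.
Qed.

Lemma NDlem (F : fieldType) (w u a : F) (r k : nat) : u * w ^+ r = 1 -> a != 0 -> (k <= r)%N ->
  (forall i, (0 < i <= r)%N -> 1 - w ^+ i != 0) ->
  (forall i, (0 < i <= r)%N -> 1 - a * w ^+ i != 0) ->
  (forall i, (0 < i <= r)%N -> 1 - a^-1 * w ^+ i != 0) ->
  (qpF u w k ^+ 2 * qpF (a * u) w k * qpF (u / a) w k) *
  (qpF w w (r - k) ^+ 2 * qpF (a * w) w (r - k) * qpF (w / a) w (r - k))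
  = (\prod_(j < k) (u * w ^+ j) ^+ 4) * (Hp w 1 r ^+ 2 * Hp w a^-1 r * Hp w a r).
Proof.
move=> huw ha hk h1 h2 h3.
rewrite qpH1 qpH [w / a]mulrC qpH [u / a]mulrC.
have G1 := @Glem F w u 1 1 r k huw (mulr1 1) hk
  (fun i hi => eq_ind _ (fun e => e != 0) (h1 i hi) _ (esym (congr1 (fun e => 1 - e) (mul1r _)))).
rewrite mul1r in G1.
have G2 := @Glem F w u a a^-1 r k huw (divff ha) hk h3.
have G3 := @Glem F w u a^-1 a r k huw (mulVf ha) hk h2.
transitivity ((qpF u w k * Hp w 1 (r - k)) ^+ 2 * (qpF (a * u) w k * Hp w a^-1 (r - k))
   * (qpF (a^-1 * u) w k * Hp w a (r - k))); first by ring.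
rewrite G1 G2 G3.
set A := \prod_(j < k) _.
set B := \prod_(j < k) _.
set C := \prod_(j < k) _.
transitivity ((A * A * B * C) * (Hp w 1 r ^+ 2 * Hp w a^-1 r * Hp w a r)); first by ring.
congr (_ * _); rewrite /A /B /C -!big_split; apply: eq_bigr => j _ /=.
by field.
Qed.

Lemma Mtot (F : fieldType) (z : F) (d : nat) (t : int) (k : nat) : z != 0 ->
  \prod_(j < k) (z ^ t * (z ^+ d) ^+ j) ^+ 4 = z ^ (4 * t * k%:Z + 2 * d%:Z * k%:Z * (k%:Z - 1)).
Proof.
move=> hz; elim: k => [|k IH].
  by rewrite big_ord0 !mulr0 mul0r add0r expr0z.
rewrite big_ord_recr /= IH -exprM (exprnP z (d * k)) -(expfzDr _ _ hz) (exprnP _ 4) exprz_exp -expfzDr //.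
congr (z ^ _); rewrite -addn1 PoszD PoszM; ring.
Qed.

Lemma zpow_mod (F : fieldType) (z : F) (m : nat) (e1 e2 c : int) : z ^+ m = 1 -> z != 0 ->
  e1 = e2 + m%:Z * c -> z ^ e1 = z ^ e2.
Proof.
by move=> hm hz ->; rewrite expfzDr // -exprz_exp -exprnP hm exp1rz mulr1.
Qed.

Lemma Hp_neq0 (F : fieldType) (w c : F) (r n : nat) :
  (forall i, (0 < i <= r)%N -> 1 - c * w ^+ i != 0) -> (n <= r)%N -> Hp w c n != 0.
Proof.
move=> h; elim: n => [|n IH] hn; first by rewrite /Hp big_ord0 oner_neq0.
rewrite HpS mulf_neq0 //; first exact: IH (ltnW hn).
by apply: h; rewrite hn.
Qed.

Definition termF (F : fieldType) (d : nat) (t : int) (q a : F) (k : nat) : F :=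
  (1 - q ^ (2 * d%:Z * k%:Z + t)) / (1 - q)
  * ((qpF (q ^ t) (q ^+ d) k) ^+ 2 * qpF (a * q ^ t) (q ^+ d) k * qpF (q ^ t / a) (q ^+ d) k)
  / ((qpF (q ^+ d) (q ^+ d) k) ^+ 2 * qpF (a * q ^+ d) (q ^+ d) k * qpF (q ^+ d / a) (q ^+ d) k)
  * q ^ ((d%:Z - 2 * t) * k%:Z).

Lemma final_alg (F : fieldType) (A1 A2 N1 N2 D1 D2 B1 B2 : F) : D1 != 0 -> D2 != 0 ->
  (A1 * N1 / D1 * B1 + A2 * N2 / D2 * B2) * (D1 * D2) = A1 * B1 * (N1 * D2) + A2 * B2 * (N2 * D1).
Proof.
move=> h1 h2; rewrite mulrDl; congr (_ + _).
  transitivity (A1 * B1 * (N1 * D2) * (D1 / D1)); first by ring.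
  by rewrite divff // mulr1.
transitivity (A2 * B2 * (N2 * D1) * (D2 / D2)); first by ring.
by rewrite divff // mulr1.
Qed.

Lemma fin2 (F : fieldType) (p1 p2 M1 M2 C1 C2 K s : F) :
  M1 * C1 = p2 * (M2 * C2) -> p1 * (M1 * C1) = M2 * C2 ->
  (1 - p1) / s * C1 * (M1 * K) + (1 - p2) / s * C2 * (M2 * K) = 0.
Proof.
move=> e1 e2.
transitivity (K / s * ((M1 * C1 - p1 * (M1 * C1)) + (M2 * C2 - p2 * (M2 * C2)))); first by ring.
by rewrite e2 e1; ring.
Qed.

Lemma pairing (F : fieldType) (m d r : nat) (t c : int) (z a : F) (k : nat) :
  z ^+ m = 1 -> z != 0 -> 1 - z != 0 -> a != 0 -> t + d%:Z * r%:Z = m%:Z * c ->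
  (forall i, (0 < i <= r)%N -> 1 - (z ^+ d) ^+ i != 0) ->
  (forall i, (0 < i <= r)%N -> 1 - a * (z ^+ d) ^+ i != 0) ->
  (forall i, (0 < i <= r)%N -> 1 - a^-1 * (z ^+ d) ^+ i != 0) ->
  (k <= r)%N -> termF d t z a k + termF d t z a (r - k) = 0.
Proof.
move=> hm hz hz1 ha ht h1 h2 h3 hk.
have huw : z ^ t * (z ^+ d) ^+ r = 1.
  rewrite -exprM (exprnP z (d * r)) -(expfzDr _ _ hz) -(expr0z z).
  by apply: (zpow_mod (c:=c) hm hz); rewrite PoszM ht add0r.
have h1' : forall i, (0 < i <= r)%N -> 1 - 1 * (z ^+ d) ^+ i != 0.
  by move=> i hi; rewrite mul1r h1.
have hD : forall n, (n <= r)%N -> (qpF (z ^+ d) (z ^+ d) n) ^+ 2 * qpF (a * z ^+ d) (z ^+ d) n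
     * qpF (z ^+ d / a) (z ^+ d) n != 0.
  move=> n hn; rewrite qpH1 qpH [_ / a]mulrC qpH.
  by rewrite !mulf_neq0 ?expf_neq0 ?(Hp_neq0 h1') ?(Hp_neq0 h2) ?(Hp_neq0 h3).
have hDk := hD k hk.
have hDrk := hD (r - k)%N (leq_subr k r).
have NDk := NDlem huw ha hk h1 h2 h3.
have NDrk := NDlem huw ha (leq_subr k r) h1 h2 h3.
rewrite subKn // in NDrk.
rewrite /termF; apply: (mulIf (mulf_neq0 hDk hDrk)); rewrite mul0r final_alg //.
rewrite NDk NDrk !Mtot //.
have ht' : t = m%:Z * c - d%:Z * r%:Z by rewrite -ht; ring.
apply: fin2.
  rewrite -!expfzDr //; apply: (zpow_mod (c := c * (4 * k%:Z - 2 * r%:Z - 1)) hm hz).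
  by rewrite -(subzn hk) ht'; ring.
rewrite -!expfzDr //; apply: (zpow_mod (c := c * (1 + 4 * k%:Z - 2 * r%:Z)) hm hz).
by rewrite -(subzn hk) ht'; ring.
Qed.

Lemma core (F : fieldType) (m d r : nat) (t c : int) (z a : F) :
  (r < m)%N -> t + d%:Z * r%:Z = m%:Z * c ->
  z ^+ m = 1 -> z != 0 -> 1 - z != 0 -> a != 0 -> (2 : F) != 0 ->
  (forall i, (0 < i <= r)%N -> 1 - (z ^+ d) ^+ i != 0) ->
  (forall i, (0 < i <= r)%N -> 1 - a * (z ^+ d) ^+ i != 0) ->
  (forall i, (0 < i <= r)%N -> 1 - a^-1 * (z ^+ d) ^+ i != 0) ->
  \sum_(k < m) termF d t z a k = 0.
Proof.
move=> hr ht hm hz hz1 ha h2 h1 h2' h3.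
have huw : z ^ t * (z ^+ d) ^+ r = 1.
  rewrite -exprM (exprnP z (d * r)) -(expfzDr _ _ hz) -(expr0z z).
  by apply: (zpow_mod (c:=c) hm hz); rewrite PoszM ht add0r.
rewrite -(big_mkord xpredT) (@big_cat_nat _ _ _ r.+1) //=.
rewrite [X in _ + X]big_nat_cond [X in _ + X]big1 ?addr0; last first.
  move=> k /andP[/andP[hk1 hk2] _].
  have hq : qpF (z ^ t) (z ^+ d) k = 0.
    by rewrite /qpF (bigD1 (Ordinal hk1)) //= huw subrr mul0r.
  by rewrite /termF hq expr0n /= !(mul0r, mulr0).
set S := \sum_(0 <= k < r.+1) _.
have hrev : S = \sum_(0 <= k < r.+1) termF d t z a (r - k).
  by rewrite /S big_nat_rev; apply: eq_bigr => k _; rewrite add0n subSS.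
have hS : S * 2 = 0.
  rewrite mulr_natr mulr2n {2}hrev /S -big_split /= big_nat_cond big1 // => k; rewrite andbT => /andP[_ hk].
  exact: (pairing hm hz hz1 ha ht h1 h2' h3).
by move/eqP: hS; rewrite mulf_eq0 (negbTE h2) orbF => /eqP.
Qed.

Lemma den_neq0 (F : fieldType) (m d : nat) (z a : F) (k : nat) : (k < m)%N ->
  (forall i, (0 < i < m)%N -> 1 - (z ^+ d) ^+ i != 0) ->
  (forall i, (0 < i < m)%N -> 1 - a * (z ^+ d) ^+ i != 0) ->
  (forall i, (0 < i < m)%N -> 1 - a^-1 * (z ^+ d) ^+ i != 0) ->
  (qpF (z ^+ d) (z ^+ d) k) ^+ 2 * qpF (a * z ^+ d) (z ^+ d) k * qpF (z ^+ d / a) (z ^+ d) k != 0.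
Proof.
move=> hk h1 h2 h3.
have h1' : forall i, (0 < i <= m.-1)%N -> 1 - 1 * (z ^+ d) ^+ i != 0.
  by move=> i hi; rewrite mul1r h1 //; lia.
have h2' : forall i, (0 < i <= m.-1)%N -> 1 - a * (z ^+ d) ^+ i != 0.
  by move=> i hi; rewrite h2 //; lia.
have h3' : forall i, (0 < i <= m.-1)%N -> 1 - a^-1 * (z ^+ d) ^+ i != 0.
  by move=> i hi; rewrite h3 //; lia.
have hk' : (k <= m.-1)%N by lia.
rewrite qpH1 qpH [_ / a]mulrC qpH.
by rewrite !mulf_neq0 ?expf_neq0 ?(Hp_neq0 h1') ?(Hp_neq0 h2') ?(Hp_neq0 h3').
Qed.

Definition PhiR (m : nat) : {poly rat} := map_poly (fun z : int => z%:~R : rat) 'Phi_m.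

Lemma PhiQE m : PhiQ m = (PhiR m)%:P. Proof. by []. Qed.

Lemma K0 (m : nat) (z : algC) : m.-primitive_root z -> forall q : {poly rat},
  ((map_poly ratr q).[z] == 0) = (PhiR m %| q).
Proof.
move=> hz q.
have [p [hmin _] hdiv] := minCpolyP z.
have hp : p = PhiR m.
  apply: (@map_poly_inj _ algC ratr).
  rewrite -hmin (minCpoly_cyclotomic hz) -(Cintr_Cyclotomic hz) /PhiR -map_poly_comp.
  by apply: eq_map_poly => n /=; rewrite rmorph_int.
by rewrite -hp -hdiv.
Qed.

Lemma PhiR_neq0 m : PhiR m != 0.
Proof.
rewrite /PhiR -size_poly_eq0 size_map_inj_poly ?size_poly_eq0 ?monic_neq0 ?Cyclotomic_monic //.
exact: intr_inj.
Qed.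

Definition ev (z : algC) (f : R2) : {poly algC} :=
  map_poly (horner_eval z) (map_poly (map_poly ratr) (f : {poly {poly rat}})).

Lemma ev_coef z (f : R2) i : (ev z f)`_i = (map_poly ratr (f : {poly {poly rat}})`_i).[z].
Proof. by rewrite /ev !coef_map. Qed.

Lemma evM z (f g : R2) : ev z (f * g) = ev z f * ev z g.
Proof. by rewrite /ev !rmorphM. Qed.
Lemma evD z (f g : R2) : ev z (f + g) = ev z f + ev z g.
Proof. by rewrite /ev !rmorphD. Qed.
Lemma evN z (f : R2) : ev z (- f) = - ev z f.
Proof. by rewrite /ev !rmorphN. Qed.
Lemma ev1 z : ev z 1 = 1.
Proof. by rewrite /ev !rmorph1. Qed.
Lemma ev0 z : ev z 0 = 0.
Proof. by rewrite /ev !rmorph0. Qed.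
Lemma evC z (p : {poly rat}) : ev z (p%:P : {poly {poly rat}}) = ((map_poly ratr p).[z])%:P.
Proof. by rewrite /ev !map_polyC. Qed.
Lemma evX z : ev z ('X : {poly {poly rat}}) = 'X.
Proof. by rewrite /ev !map_polyX. Qed.

Lemma K1 (m : nat) (z : algC) : m.-primitive_root z -> forall f : R2,
  ev z f = 0 -> dvdR (PhiQ m) f.
Proof.
move=> hz f h.
have hc : forall i, PhiR m %| (f : {poly {poly rat}})`_i.
  by move=> i; rewrite -(K0 hz) -ev_coef h coef0 eqxx.
exists (\poly_(i < size (f : {poly {poly rat}})) ((f : {poly {poly rat}})`_i %/ PhiR m)).
apply/polyP => i; rewrite PhiQE coefMC coef_poly.
case: ltnP => hi; first by rewrite divpK.
by rewrite mul0r nth_default.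
Qed.

Lemma K2 (m : nat) (z : algC) : m.-primitive_root z -> forall D : R2,
  ev z D != 0 -> coprimeR D (PhiQ m).
Proof.
move=> hz D hD g [c1 h1] [c2 h2].
move: g c1 c2 h1 h2; rewrite /R2 => g c1 c2 h1 h2.
have hP0 : PhiQ m != 0 by rewrite PhiQE polyC_eq0 PhiR_neq0.
have hc2 : c2 != 0 by apply: contraNneq hP0 => e; rewrite h2 e mul0r.
have hg : g != 0 by apply: contraNneq hP0 => e; rewrite h2 e mulr0.
have hs := size_mul hc2 hg.
rewrite -h2 PhiQE size_polyC PhiR_neq0 in hs.
have s1 : (0 < size c2)%N by rewrite size_poly_gt0.
have s2 : (0 < size g)%N by rewrite size_poly_gt0.
have sg : size g = 1%N by lia.
have sc : size c2 = 1%N by lia.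
have eg := size1_polyC (eq_leq sg).
have ec := size1_polyC (eq_leq sc).
set g0 := g`_0 in eg.
have e0 : PhiR m = c2`_0 * g0.
  by apply: (@polyC_inj _); rewrite polyCM -PhiQE h2 {1}ec {1}eg.
have hg0 : (map_poly ratr g0).[z] != 0.
  apply: contra hD => /eqP e.
  by rewrite h1 evM eg evC e polyC0 mulr0.
have hPz : (map_poly ratr (PhiR m)).[z] == 0 by rewrite (K0 hz) dvdpp.
rewrite e0 rmorphM hornerM mulf_eq0 (negbTE hg0) orbF (K0 hz) in hPz.
have hc0 : c2`_0 != 0 by apply: contraNneq (PhiR_neq0 m) => e; rewrite e0 e mul0r.
have hg00 : g0 != 0 by apply: contraNneq (PhiR_neq0 m) => e; rewrite e0 e mulr0.
have hle := dvdp_leq hc0 hPz.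
rewrite e0 size_mul // in hle.
have sg0p : (0 < size g0)%N by rewrite size_poly_gt0.
have sg0 : size g0 = 1%N.
  have : (0 < size (c2`_0)%R)%N by rewrite size_poly_gt0.
  lia.
rewrite poly_unitE sg /= poly_unitE sg0 /= unitfE.
have := hg00; rewrite -lead_coef_eq0 lead_coefE sg0 //.
Qed.

Definition L : fieldType := {fraction {poly algC}}.
Definition evf (z : algC) (f : R2) : L := tofrac (ev z f).

Definition Rel (z : algC) (x : F2) (v : L) : Prop :=
  exists N D : R2, ev z D != 0 /\ x = tofrac N / tofrac D /\ v = evf z N / evf z D.

Lemma nz_of_ev z (D : R2) : ev z D != 0 -> tofrac D != 0 :> F2.
Proof. by move=> h; rewrite tofrac_eq0; apply: contraNneq h => ->; rewrite ev0. Qed.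

Lemma evf_neq0 z (D : R2) : ev z D != 0 -> evf z D != 0.
Proof. by move=> h; rewrite /evf tofrac_eq0. Qed.

Lemma evfM z (f g : R2) : evf z (f * g) = evf z f * evf z g.
Proof. by rewrite /evf evM rmorphM. Qed.
Lemma evfD z (f g : R2) : evf z (f + g) = evf z f + evf z g.
Proof. by rewrite /evf evD rmorphD. Qed.
Lemma evfN z (f : R2) : evf z (- f) = - evf z f.
Proof. by rewrite /evf evN rmorphN. Qed.
Lemma evf1 z : evf z 1 = 1.
Proof. by rewrite /evf ev1 rmorph1. Qed.

Lemma Rel_frac z (p : R2) : Rel z (tofrac p) (evf z p).
Proof.
exists p, 1; split; first by rewrite ev1 oner_neq0.
by rewrite evf1 rmorph1 !divr1.
Qed.

Lemma Rel_add z x1 x2 v1 v2 : Rel z x1 v1 -> Rel z x2 v2 -> Rel z (x1 + x2) (v1 + v2).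
Proof.
move=> [N1 [D1 [h1 [-> ->]]]] [N2 [D2 [h2 [-> ->]]]].
exists (N1 * D2 + N2 * D1), (D1 * D2); split; first by rewrite evM mulf_neq0.
split; first by rewrite (addf_div _ _ (nz_of_ev h1) (nz_of_ev h2)) rmorphD !rmorphM.
by rewrite (addf_div _ _ (evf_neq0 h1) (evf_neq0 h2)) evfD !evfM.
Qed.

Lemma Rel_mul z x1 x2 v1 v2 : Rel z x1 v1 -> Rel z x2 v2 -> Rel z (x1 * x2) (v1 * v2).
Proof.
move=> [N1 [D1 [h1 [-> ->]]]] [N2 [D2 [h2 [-> ->]]]].
exists (N1 * N2), (D1 * D2); split; first by rewrite evM mulf_neq0.
split; first by rewrite mulf_div !rmorphM.
by rewrite mulf_div !evfM.
Qed.

Lemma Rel_opp z x v : Rel z x v -> Rel z (- x) (- v).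
Proof.
move=> [N [D [h [-> ->]]]].
exists (- N), D; split => //; split; first by rewrite rmorphN mulNr.
by rewrite evfN mulNr.
Qed.

Lemma Rel_inv z x v : Rel z x v -> v != 0 -> Rel z x^-1 v^-1.
Proof.
move=> [N [D [h [-> ->]]]] hv.
have hN : ev z N != 0.
  by apply: contraNneq hv => e; rewrite /evf e rmorph0 mul0r.
exists D, N; split => //; split; by rewrite invf_div.
Qed.

Lemma Rel_one z : Rel z 1 1.
Proof. by have := Rel_frac z 1; rewrite rmorph1 evf1. Qed.

Lemma Rel_sub z x1 x2 v1 v2 : Rel z x1 v1 -> Rel z x2 v2 -> Rel z (x1 - x2) (v1 - v2).
Proof. by move=> h1 h2; apply: Rel_add => //; apply: Rel_opp. Qed.

Lemma Rel_div z x1 x2 v1 v2 : Rel z x1 v1 -> Rel z x2 v2 -> v2 != 0 -> Rel z (x1 / x2) (v1 / v2).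
Proof. by move=> h1 h2 h; apply: Rel_mul => //; apply: Rel_inv. Qed.

Lemma Rel_exp z x v n : Rel z x v -> Rel z (x ^+ n) (v ^+ n).
Proof.
move=> h; elim: n => [|n IH]; first by rewrite !expr0; apply: Rel_one.
by rewrite !exprS; apply: Rel_mul.
Qed.

Lemma Rel_expz z x v (e : int) : Rel z x v -> v != 0 -> Rel z (x ^ e) (v ^ e).
Proof.
move=> h hv; case: e => n.
  by rewrite -!exprnP; apply: Rel_exp.
rewrite NegzE -!exprnN; apply: Rel_inv; first exact: Rel_exp.
by rewrite expf_neq0.
Qed.

Lemma Rel_prod z n (f : nat -> F2) (g : nat -> L) : (forall i, Rel z (f i) (g i)) ->
  Rel z (\prod_(i < n) f i) (\prod_(i < n) g i).
Proof.
move=> h; elim/big_rec2: _ => [|i y1 y2 _ IH]; first exact: Rel_one.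
exact: Rel_mul.
Qed.

Lemma Rel_sum z n (f : nat -> F2) (g : nat -> L) : (forall i, (i < n)%N -> Rel z (f i) (g i)) ->
  Rel z (\sum_(i < n) f i) (\sum_(i < n) g i).
Proof.
move=> h; elim/big_rec2: _ => [|i y1 y2 _ IH]; last exact: Rel_add (h _ (ltn_ord i)) IH.
by have := Rel_frac z 0; rewrite rmorph0 /evf ev0 rmorph0.
Qed.

Lemma Rel_qp z x y v w k : Rel z x v -> Rel z y w -> Rel z (qpF x y k) (qpF v w k).
Proof.
move=> hx hy; rewrite /qpF.
apply: (@Rel_prod z k (fun i => 1 - x * y ^+ i) (fun i => 1 - v * w ^+ i)) => i.
by apply: Rel_sub; [apply: Rel_one | apply: Rel_mul => //; apply: Rel_exp].
Qed.

Lemma Rel_term z (d : nat) (t : int) (q a : F2) (qL aL : L) k :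
  Rel z q qL -> Rel z a aL -> qL != 0 -> aL != 0 -> 1 - qL != 0 ->
  (qpF (qL ^+ d) (qL ^+ d) k) ^+ 2 * qpF (aL * qL ^+ d) (qL ^+ d) k * qpF (qL ^+ d / aL) (qL ^+ d) k != 0 ->
  Rel z (termF d t q a k) (termF d t qL aL k).
Proof.
move=> hq ha hq0 ha0 hq1 hD; rewrite /termF.
have hqt := Rel_expz t hq hq0.
have hqd := Rel_exp d hq.
apply: Rel_mul; last by apply: Rel_expz.
apply: Rel_div; last exact: hD.
  apply: Rel_mul.
    apply: Rel_div; last exact: hq1.
      by apply: Rel_sub; [apply: Rel_one | apply: Rel_expz].
    by apply: Rel_sub; [apply: Rel_one | ].
  apply: Rel_mul; first apply: Rel_mul.
  - by apply: Rel_exp; apply: Rel_qp.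
  - by apply: Rel_qp; [apply: Rel_mul | ].
  - by apply: Rel_qp; [apply: Rel_div | ].
apply: Rel_mul; first apply: Rel_mul.
- by apply: Rel_exp; apply: Rel_qp.
- by apply: Rel_qp; [apply: Rel_mul | ].
- by apply: Rel_qp; [apply: Rel_div | ].
Qed.

Lemma exists_r (m d : nat) (t : int) : (0 < m)%N -> coprime d m ->
  exists r : nat, exists c : int, (r < m)%N /\ t + d%:Z * r%:Z = m%:Z * c.
Proof.
move=> hm hc.
have [a _ hdiv] := Bezoutl d hm.
have hg : gcdn m d = 1%N by rewrite gcdnC; apply/eqP.
rewrite hg in hdiv.
have [e he] := dvdnP hdiv.
have he' : 1 + a%:Z * d%:Z = e%:Z * m%:Z by rewrite -!PoszM -PoszD he.
have hm' : m%:Z != 0 by rewrite eqz_nat; lia.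
have hx0 : 0 <= ((t * a%:Z) %% m%:Z)%Z by apply: modz_ge0.
have hxm : ((t * a%:Z) %% m%:Z)%Z < m%:Z by apply: ltz_pmod; rewrite ltz_nat.
exists `|((t * a%:Z) %% m%:Z)%Z|%N, (t * e%:Z - d%:Z * ((t * a%:Z) %/ m%:Z)%Z).
rewrite gez0_abs //; split; first by rewrite -ltz_nat gez0_abs.
have hdz := divz_eq (t * a%:Z) m%:Z.
set q := ((t * a%:Z) %/ m%:Z)%Z in hdz *.
set rr := ((t * a%:Z) %% m%:Z)%Z in hdz *.
apply/eqP; rewrite -subr_eq0.
have -> : t + d%:Z * rr - m%:Z * (t * e%:Z - d%:Z * q) =
  t * (1 + a%:Z * d%:Z - e%:Z * m%:Z) - d%:Z * (t * a%:Z - (q * m%:Z + rr)) by ring.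
by rewrite he' -hdz !subrr !mulr0 subr0.
Qed.

Lemma oneB_tofrac (c : algC) : (1 - tofrac (c%:P) : L) = tofrac ((1 - c)%:P).
Proof. by rewrite polyCB rmorphB polyC1 rmorph1. Qed.

Lemma oneB_tofracP (p : {poly algC}) : (1 - tofrac p : L) = tofrac (1 - p).
Proof. by rewrite rmorphB rmorph1. Qed.

Unset Implicit Arguments.

Theorem lemma2 (m d : nat) (t : int) :
  (1 < m)%N -> (2 <= d)%N -> coprime d m -> coprimez (d%:Z) t ->
  congr_Phi m
    (\sum_(k < m)
       qint (2 * d%:Z * k%:Z + t)
       * ((qpoch (qv ^ t) (qv ^+ d) k) ^+ 2
          * qpoch (av * qv ^ t) (qv ^+ d) k
          * qpoch (qv ^ t / av) (qv ^+ d) k)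
       / ((qpoch (qv ^+ d) (qv ^+ d) k) ^+ 2
          * qpoch (av * qv ^+ d) (qv ^+ d) k
          * qpoch (qv ^+ d / av) (qv ^+ d) k)
       * qv ^ ((d%:Z - 2 * t) * k%:Z))
    0.
Proof.
move=> hm hd hdm _.
have hm0 : (0 < m)%N by lia.
have [z hz] := C_prim_root_exists hm0.
pose zL : L := tofrac (z%:P).
pose aL : L := tofrac ('X : {poly algC}).
have hRq : Rel z qv zL.
  have := Rel_frac z (('X : {poly rat})%:P).
  by rewrite /evf evC map_polyX hornerX.
have hRa : Rel z av aL.
  by have := Rel_frac z ('X : {poly {poly rat}}); rewrite /evf evX.
have hzm := prim_expr_order hz.
have hzi : forall i, (0 < i < m)%N -> z ^+ i != 1.
  move=> i hi; rewrite -(prim_order_dvd hz); apply/negP => /dvdn_leq; lia.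
have hz0 : z != 0.
  apply/eqP => e; move: hzm; rewrite e expr0n.
  have -> : (m == 0%N) = false by apply/eqP; lia.
  by move/eqP; rewrite eq_sym oner_eq0.
have zLX : forall n, zL ^+ n = tofrac ((z ^+ n)%:P).
  by move=> n; rewrite /zL -!rmorphXn.
have hz1 : zL ^+ m = 1 by rewrite zLX hzm polyC1 rmorph1.
have hzL0 : zL != 0 by rewrite /zL tofrac_eq0 polyC_eq0.
have haL0 : aL != 0 by rewrite /aL tofrac_eq0 polyX_eq0.
have hz1' : 1 - zL != 0.
  rewrite /zL oneB_tofrac tofrac_eq0 polyC_eq0 subr_eq0 eq_sym.
  by have := hzi 1%N; rewrite expr1; apply; lia.
have h2 : (2 : L) != 0.
  have e2 : tofrac (((2 : algC))%:P) = (2 : L) by rewrite !rmorph_nat.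
  by rewrite -e2 tofrac_eq0 polyC_eq0 Num.Theory.pnatr_eq0.
have hw : forall i, (0 < i < m)%N -> 1 - (zL ^+ d) ^+ i != 0.
  move=> i hi; rewrite -exprM zLX oneB_tofrac tofrac_eq0 polyC_eq0 subr_eq0 eq_sym.
  rewrite -(prim_order_dvd hz) Gauss_dvdr; last by rewrite coprime_sym.
  by apply/negP => /dvdn_leq; lia.
have hzn : forall n, z ^+ n != 0 by move=> n; rewrite expf_neq0.
have ha : forall i, 1 - aL * (zL ^+ d) ^+ i != 0.
  move=> i; rewrite -exprM zLX /aL -rmorphM oneB_tofracP tofrac_eq0.
  apply/negP => /eqP /(congr1 (fun p => p.[0])).
  by rewrite !hornerE /= subr0 => /eqP; rewrite oner_eq0.
have ha' : forall i, 1 - aL^-1 * (zL ^+ d) ^+ i != 0.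
  move=> i; rewrite -exprM zLX; apply/negP => /eqP h.
  have : tofrac ((z ^+ (d * i))%:P) = aL.
    move/eqP: h; rewrite subr_eq0 => /eqP h.
    by rewrite -[LHS](mulVKf haL0) -h mulr1.
  rewrite /aL => /eqP; rewrite tofrac_eq => /eqP e.
  by have := size_polyX algC; rewrite -e size_polyC hzn.
have [r [c [hr ht]]] := exists_r t hm0 hdm.
have hcore : \sum_(k < m) termF d t zL aL k = 0.
  apply: (core hr ht hz1 hzL0 hz1' haL0 h2).
  - by move=> i hi; apply: hw; lia.
  - by move=> i hi; apply: ha.
  - by move=> i hi; apply: ha'.
have hrel : Rel z (\sum_(k < m) termF d t qv av k) (\sum_(k < m) termF d t zL aL k).
  apply: (@Rel_sum z m (fun k => termF d t qv av k) (fun k => termF d t zL aL k)) => k hk.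
  apply: (Rel_term t hRq hRa hzL0 haL0 hz1').
  apply: (den_neq0 hk hw) => i _; [exact: ha | exact: ha'].
rewrite hcore in hrel.
change (congr_Phi m (\sum_(k < m) termF d t qv av k) 0).
have [N [D [hD [-> hv]]]] := hrel.
have hN : ev z N = 0.
  apply/eqP; rewrite -(tofrac_eq0 (ev z N)); apply/eqP.
  move/esym/eqP: hv; rewrite mulf_eq0 invr_eq0 (negbTE (evf_neq0 hD)) orbF.
  by move/eqP.
exists N, D; split; first exact: (K2 hz hD).
by split; [exact: (K1 hz hN) | rewrite subr0].
Qed.
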